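(* Let $(\mathcal{F},\mathcal{F}_d,R)$ be a justification frame, $x\in\mathcal{F}_d$, let $\mathbb{B}$ be a branch selection for $x$, and let $x\gets A$ be a rule in $R$. Then there exists $y^*\in A$ such that $\mathbb{B}_{y^*}:=\{y^*\to b \mid x\to y^*\to b\in\mathbb{B}\}$ is a branch selection for $y^*$.
   Context: A fact space is a set $\mathcal{F}$ containing $\mathcal{L}=\{\mathbf{t},\mathbf{f},\mathbf{u}\}$, equipped with an involution $\sim$ with $\sim\mathbf{t}=\mathbf{f}$, $\sim\mathbf{u}=\mathbf{u}$, $\sim x\ne x$ for $x\ne\mathbf{u}$. A justification frame is $(\mathcal{F},\mathcal{F}_d,R)$ with defined facts $\mathcal{F}_d\subseteq\mathcal{F}$, $\sim\mathcal{F}_d=\mathcal{F}_d$, $\mathcal{L}\cap\mathcal{F}_d=\emptyset$, and rules $R\subseteq\mathcal{F}_d\times2^{\mathcal{F}}$ written $x\gets A$, such that each $x\in\mathcal{F}_d$ has a rule with nonempty body and no rule with empty body; open facts $\mathcal{F}_o=\mathcal{F}\setminus\mathcal{F}_d$. A (tree-like) justification is a directed labeled forest whose internal nodes $n$ are labeled by defined facts with $\ell(n)\gets\{\ell(m): (n,m)\text{ an edge}\}\in R$; it is locally complete if no leaf is labeled by a defined fact; it is rooted in $x$ if a node labeled $x$ reaches all nodes. For an open fact $y$, the only locally complete justification rooted in $y$ is the single-node justification labeled $y$ (whose only branch is $y$). A branch is an infinite sequence of defined facts or a finite sequence of defined facts followed by an open fact. A $J$-branch starting in $x$ is a path in $J$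 from the root node labeled $x$ that is infinite or ends in a leaf. A branch selection for a fact $x$ is a set $\mathbb{B}$ of branches starting in $x$ such that for each locally complete justification $J$ rooted in $x$, $\mathbb{B}$ contains at least one $J$-branch starting in $x$. *)

(* Defs.v *)
From Stdlib Require Import List Relations.
Import ListNotations.
Set Implicit Arguments.

Record FactSpace := {
  fact :> Type;
  ftrue : fact;
  ffalse : fact;
  funkn : fact;
  neg : fact -> fact;
  ftrue_ffalse : ftrue <> ffalse;
  ftrue_funkn : ftrue <> funkn;
  ffalse_funkn : ffalse <> funkn;
  neg_invol : forall x, neg (neg x) = x;
  neg_true : neg ftrue = ffalse;
  neg_unkn : neg funkn = funkn;
  neg_ne : forall x, x <> funkn -> neg x <> x
}.

Definition logical (FS : FactSpace) (x : FS) : Prop :=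
  x = ftrue FS \/ x = ffalse FS \/ x = funkn FS.

Record JFrame (FS : FactSpace) := {
  defined : FS -> Prop;
  rule : FS -> (FS -> Prop) -> Prop;
  defined_neg : forall x, defined x -> defined (neg FS x);
  defined_not_logical : forall x, defined x -> ~ @logical FS x;
  rule_head_defined : forall x A, rule x A -> defined x;
  rule_nonempty_exists : forall x, defined x -> exists A, rule x A /\ exists y, A y;
  rule_no_empty : forall x A, rule x A -> exists y, A y
}.

Definition opened (FS : FactSpace) (JF : JFrame FS) (x : FS) : Prop :=
  ~ defined JF x.

Inductive fseq (F : Type) : Type :=
| FinSeq : list F -> fseq F
| InfSeq : (nat -> F) -> fseq F.
Arguments FinSeq {F}.
Arguments InfSeq {F}.

Definition is_branch (FS : FactSpace) (JF : JFrame FS) (b : fseq FS) : Prop :=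
  match b with
  | FinSeq l => exists pre o, l = pre ++ [o] /\ Forall (defined JF) pre /\ opened JF o
  | InfSeq s => forall i, defined JF (s i)
  end.

Definition starts_in (F : Type) (x : F) (b : fseq F) : Prop :=
  match b with
  | FinSeq l => exists l', l = x :: l'
  | InfSeq s => s 0 = x
  end.

Definition fcons (F : Type) (x : F) (b : fseq F) : fseq F :=
  match b with
  | FinSeq l => FinSeq (x :: l)
  | InfSeq s => InfSeq (fun i => match i with 0 => x | S k => s k end)
  end.

Record justification (FS : FactSpace) (JF : JFrame FS) := {
  node : Type;
  lab : node -> FS;
  edge : node -> node -> Prop;            (* edge n m : n is the parent of m *)
  edge_one_parent : forall n1 n2 m, edge n1 m -> edge n2 m -> n1 = n2;
  edge_acyclic : forall n, ~ clos_trans node edge n n;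
  internal_rule : forall n, (exists m, edge n m) ->
     defined JF (lab n) /\
     exists A, rule JF (lab n) A /\ (forall y, A y <-> exists m, edge n m /\ lab m = y)
}.

Definition is_leaf (FS : FactSpace) (JF : JFrame FS) (J : justification JF) (n : node J) : Prop :=
  forall m, ~ edge J n m.

Definition locally_complete (FS : FactSpace) (JF : JFrame FS) (J : justification JF) : Prop :=
  forall n, @is_leaf FS JF J n -> opened JF (lab J n).

Definition root_of (FS : FactSpace) (JF : JFrame FS) (J : justification JF) (x : FS) (r : node J) : Prop :=
  lab J r = x /\ forall m, clos_refl_trans (node J) (edge J) r m.

Definition rooted_in (FS : FactSpace) (JF : JFrame FS) (J : justification JF) (x : FS) : Prop :=
  exists r, @root_of FS JF J x r.

Fixpoint is_path (N : Type) (E : N -> N -> Prop) (n : N) (l : list N) : Prop :=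
  match l with
  | [] => True
  | m :: l' => E n m /\ is_path E m l'
  end.

Definition J_branch (FS : FactSpace) (JF : JFrame FS) (J : justification JF) (x : FS) (b : fseq FS) : Prop :=
  exists r, @root_of FS JF J x r /\
    ((exists rest, is_path (edge J) r rest /\ is_leaf J (last rest r) /\
                   b = FinSeq (map (lab J) (r :: rest)))
     \/
     (exists p : nat -> node J, p 0 = r /\ (forall i, edge J (p i) (p (S i))) /\
                   b = InfSeq (fun i => lab J (p i)))).

Definition branch_selection (FS : FactSpace) (JF : JFrame FS) (x : FS) (B : fseq FS -> Prop) : Prop :=
  (forall b, B b -> is_branch JF b /\ starts_in x b) /\
  (forall J : justification JF, locally_complete J -> rooted_in J x ->
     exists b, B b /\ J_branch J x b).

Definition sub_selection (F : Type) (x y : F) (B : fseq F -> Prop) : fseq F -> Prop :=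
  fun b => starts_in y b /\ B (fcons x b).

(* Main.v *)
Require Import Defs.
From Stdlib Require Import List Relations Classical ClassicalEpsilon FunctionalExtensionality Eqdep.
Import ListNotations.
Set Implicit Arguments.

Inductive cedge (FS : FactSpace) (JF : JFrame FS) (A : FS -> Prop)
  (J : {y | A y} -> justification JF) (r : forall p, node (J p)) :
  option {p : {y | A y} & node (J p)} -> option {p : {y | A y} & node (J p)} -> Prop :=
| ce_root : forall p, @cedge FS JF A J r None (Some (existT _ p (r p)))
| ce_in : forall p n m, edge (J p) n m -> @cedge FS JF A J r (Some (existT _ p n)) (Some (existT _ p m)).

Arguments cedge {FS JF A J} r _ _.
Arguments ce_root {FS JF A J r} p.
Arguments ce_in {FS JF A J r} p n m _.

Ltac inv_ex :=
  repeat match goal with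
  | Hx : existT _ ?a _ = existT _ ?b _ |- _ =>
      first [ apply inj_pair2 in Hx; subst
            | let E := fresh in assert (E : a = b) by exact (f_equal (@projT1 _ _) Hx); subst ]
  | Hx : Some _ = Some _ |- _ => injection Hx; clear Hx; intros; subst
  end.

Lemma cedge_some (FS : FactSpace) (JF : JFrame FS) (A : FS -> Prop)
  (J : {y | A y} -> justification JF) (r : forall p, node (J p)) p n c :
  cedge r (Some (existT _ p n)) c -> exists m, c = Some (existT _ p m) /\ edge (J p) n m.
Proof.
  intros H. inversion H; subst. inv_ex. eauto.
Qed.

Lemma cedge_none (FS : FactSpace) (JF : JFrame FS) (A : FS -> Prop)
  (J : {y | A y} -> justification JF) (r : forall p, node (J p)) c :
  cedge r None c -> exists p, c = Some (existT _ p (r p)).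
Proof. intros H. inversion H; subst. eauto. Qed.

Lemma cedge_to_none (FS : FactSpace) (JF : JFrame FS) (A : FS -> Prop)
  (J : {y | A y} -> justification JF) (r : forall p, node (J p)) c :
  ~ cedge r c None.
Proof. intros H. inversion H. Qed.

Lemma ctrans_some (FS : FactSpace) (JF : JFrame FS) (A : FS -> Prop)
  (J : {y | A y} -> justification JF) (r : forall p, node (J p)) a b :
  clos_trans _ (cedge r) a b -> forall p n, a = Some (existT _ p n) ->
  exists m, b = Some (existT _ p m) /\ clos_trans _ (edge (J p)) n m.
Proof.
  intros H. apply clos_trans_t1n in H. induction H; intros p n Ha; subst.
  - destruct (cedge_some H) as [m [-> Hm]]. eauto using t_step.
  - destruct (cedge_some H) as [m [-> Hm]].
    destruct (IHclos_trans_1n p m eq_refl) as [m' [-> Hm']].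
    exists m'. split; auto. eapply t_trans; [apply t_step; exact Hm| exact Hm'].
Qed.

Lemma crt_none (FS : FactSpace) (JF : JFrame FS) (A : FS -> Prop)
  (J : {y | A y} -> justification JF) (r : forall p, node (J p)) a :
  clos_refl_trans _ (cedge r) a None -> a = None.
Proof.
  intros H. apply clos_rt_rtn1 in H. inversion H; subst; auto.
  exfalso; eapply cedge_to_none; eauto.
Qed.

Lemma crt_lift (FS : FactSpace) (JF : JFrame FS) (A : FS -> Prop)
  (J : {y | A y} -> justification JF) (r : forall p, node (J p)) p n m :
  clos_refl_trans _ (edge (J p)) n m ->
  clos_refl_trans _ (cedge r) (Some (existT _ p n)) (Some (existT _ p m)).
Proof.
  intros H; induction H.
  - apply rt_step. constructor. auto.
  - apply rt_refl.
  - eapply rt_trans; eauto.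
Qed.

Definition clab (FS : FactSpace) (JF : JFrame FS) (x : FS) (A : FS -> Prop)
  (J : {y | A y} -> justification JF) (c : option {p : {y | A y} & node (J p)}) : FS :=
  match c with None => x | Some (existT _ p n) => lab (J p) n end.

Arguments clab {FS JF} x {A} J c.

Definition combine (FS : FactSpace) (JF : JFrame FS) (x : FS) (A : FS -> Prop)
  (Hx : defined JF x) (HA : rule JF x A)
  (J : {y | A y} -> justification JF) (r : forall p, node (J p))
  (Hr : forall p, root_of (J p) (proj1_sig p) (r p)) : justification JF.
Proof.
  refine {| node := option {p : {y | A y} & node (J p)};
            lab := clab x J; edge := cedge r |}.
  - intros n1 n2 m H1 H2. destruct n1 as [[p1 k1]|]; destruct n2 as [[p2 k2]|].
    + destruct (cedge_some H1) as [m1 [-> E1]].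
      destruct (cedge_some H2) as [m2 [E E2]].
      inv_ex.
      rewrite (edge_one_parent _ _ _ _ E1 E2). reflexivity.
    + destruct (cedge_some H1) as [m1 [-> E1]].
      destruct (cedge_none H2) as [q E]. inv_ex. exfalso.
      apply (@edge_acyclic _ _ (J q) (r q)). apply clos_rt_t with k1.
      exact (proj2 (Hr q) k1). apply t_step; exact E1.
    + destruct (cedge_some H2) as [m2 [-> E2]].
      destruct (cedge_none H1) as [q E]. inv_ex. exfalso.
      match goal with Ee : edge (J ?q) k2 (r ?q) |- _ =>
        apply (@edge_acyclic _ _ (J q) (r q)); apply clos_rt_t with k2;
        [exact (proj2 (Hr q) k2) | apply t_step; exact Ee] end.
    + reflexivity.
  - intros [[p k]|] H.
    + destruct (ctrans_some H eq_refl) as [m [E Hm]].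
      inv_ex. exact (edge_acyclic _ Hm).
    + apply clos_trans_tn1 in H. inversion H; eapply cedge_to_none; eauto.
  - intros [[p k]|] [m Hm].
    + destruct (cedge_some Hm) as [m' [-> E]].
      destruct (internal_rule (J p) k (ex_intro _ m' E)) as [Hd [A' [HA' Hiff]]].
      split; [exact Hd|]. exists A'. split; [exact HA'|].
      intros y. rewrite Hiff. split.
      * intros [m'' [E1 E2]]. exists (Some (existT _ p m'')). split; [constructor; auto| exact E2].
      * intros [c [Ec Ec2]]. destruct (cedge_some Ec) as [m'' [-> E3]].
        exists m''. auto.
    + split; [exact Hx|]. exists A. split; [exact HA|].
      intros y. split.
      * intros Ay. exists (Some (existT _ (exist _ y Ay) (r (exist _ y Ay)))).
        split; [constructor|]. simpl. destruct (Hr (exist _ y Ay)) as [Hl _]. exact Hl.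
      * intros [c [Ec Ec2]]. destruct (cedge_none Ec) as [q ->]. simpl in Ec2.
        destruct (Hr q) as [Hl _]. rewrite Hl in Ec2. subst. exact (proj2_sig q).
Defined.

Lemma path_lift (FS : FactSpace) (JF : JFrame FS) (A : FS -> Prop)
  (J : {y | A y} -> justification JF) (r : forall p, node (J p)) p l : forall n,
  is_path (cedge r) (Some (existT _ p n)) l ->
  exists ns, l = map (fun m => Some (existT (fun p => node (J p)) p m)) ns /\ is_path (edge (J p)) n ns.
Proof.
  induction l as [|c l IH]; intros n H.
  - exists []. simpl. auto.
  - destruct H as [Hc Hl]. destruct (cedge_some Hc) as [m [-> Em]].
    destruct (IH m Hl) as [ns [-> Hns]]. exists (m :: ns). simpl. auto.
Qed.

Lemma last_cons_eq (T : Type) (c d : T) l : last (c :: l) d = last l c.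
Proof.
  revert c d. induction l as [|a l IH]; intros c d; [reflexivity|].
  change (last (a :: l) d = last (a :: l) c). rewrite !IH. reflexivity.
Qed.

Lemma last_map_eq (T U : Type) (f : T -> U) l d : last (map f l) (f d) = f (last l d).
Proof.
  revert d. induction l as [|a l IH]; intros d; [reflexivity|].
  change (map f (a :: l)) with (f a :: map f l).
  rewrite !last_cons_eq. apply IH.
Qed.

Lemma sub_branch (FS : FactSpace) (JF : JFrame FS) (x : FS)
  (Hx : defined JF x) (B : fseq FS -> Prop)
  (HB1 : forall b, B b -> is_branch JF b /\ starts_in x b) y b :
  sub_selection x y B b -> is_branch JF b /\ starts_in y b.
Proof.
  intros [Hs Hb]. split; [|exact Hs].
  destruct (HB1 _ Hb) as [Hbr _]. destruct b as [l|s]; simpl in *.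
  - destruct Hbr as [pre [o [E [Hf Ho]]]].
    destruct pre as [|z pre].
    + simpl in E. injection E as -> ->. exfalso. exact (Ho Hx).
    + simpl in E. injection E as -> ->. inversion Hf; subst. eauto.
  - intros i. exact (Hbr (S i)).
Qed.

Theorem mainTheorem3 (FS : FactSpace) (JF : JFrame FS) (x : FS)
  (Hx : defined JF x) (B : fseq FS -> Prop)
  (HB : branch_selection JF x B) (A : FS -> Prop) (HA : rule JF x A) :
  exists ystar, A ystar /\ branch_selection JF ystar (sub_selection x ystar B).
Proof.
  destruct HB as [HB1 HB2].
  apply NNPP; intro Hno.
  assert (H : forall p : {y | A y}, exists J : justification JF, exists r0,
    root_of J (proj1_sig p) r0 /\ locally_complete J /\
    forall b, sub_selection x (proj1_sig p) B b -> ~ J_branch J (proj1_sig p) b).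
  { intro p. apply NNPP; intro Hn. apply Hno. exists (proj1_sig p).
    split; [exact (proj2_sig p)|]. split.
    - intros b Hb. eapply sub_branch; eauto.
    - intros J HJ [r0 Hr0]. apply NNPP; intro Hnb. apply Hn. exists J, r0.
      split; [exact Hr0|]. split; [exact HJ|]. intros b Hb Hjb. apply Hnb. eauto. }
  pose (JP := fun p => constructive_indefinite_description _ (H p)).
  pose (J := fun p => proj1_sig (JP p)).
  assert (HJ : forall p, exists r0, root_of (J p) (proj1_sig p) r0 /\ locally_complete (J p) /\
    forall b, sub_selection x (proj1_sig p) B b -> ~ J_branch (J p) (proj1_sig p) b)
    by (intro p; exact (proj2_sig (JP p))).
  clearbody J. clear JP H.
  pose (RP := fun p => constructive_indefinite_description _ (HJ p)).
  pose (r := fun p => proj1_sig (RP p)).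
  assert (Hr : forall p, root_of (J p) (proj1_sig p) (r p) /\ locally_complete (J p) /\
    forall b, sub_selection x (proj1_sig p) B b -> ~ J_branch (J p) (proj1_sig p) b)
    by (intro p; exact (proj2_sig (RP p))).
  clearbody r. clear RP HJ.
  assert (Hroot : forall p, root_of (J p) (proj1_sig p) (r p)) by (intro p; apply Hr).
  pose (Jc := @combine FS JF x A Hx HA J r Hroot).
  destruct (rule_no_empty _ _ _ HA) as [y0 Hy0].
  pose (p0 := exist A y0 Hy0).
  assert (Hlc : locally_complete Jc).
  { intros [[p k]|] Hleaf.
    - simpl. destruct (Hr p) as [_ [Hlc _]]. apply Hlc.
      intros m E. apply (Hleaf (Some (existT _ p m))). constructor. exact E.
    - exfalso. apply (Hleaf (Some (existT _ p0 (r p0)))). constructor. }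
  assert (Hrt : rooted_in Jc x).
  { exists None. split; [reflexivity|]. intros [[p k]|]; [|apply rt_refl].
    eapply rt_trans; [apply rt_step; exact (ce_root p)|].
    apply crt_lift. apply (proj2 (Hroot p)). }
  destruct (HB2 Jc Hlc Hrt) as [b [Hb Hjb]].
  destruct Hjb as [r' [[Hr'l Hr'r] Hcase]].
  assert (r' = None) by (apply crt_none with (r := r); exact (Hr'r None)). subst r'.
  destruct Hcase as [[rest [Hpath [Hleaf ->]]] | [ps [Hp0 [Hps ->]]]].
  - destruct rest as [|c rest].
    + exfalso. apply (Hleaf (Some (existT _ p0 (r p0)))). constructor.
    + destruct Hpath as [Hc Hpath]. destruct (cedge_none Hc) as [p ->].
      destruct (@path_lift FS JF A J r p rest (r p) Hpath) as [ns [-> Hns]].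
      destruct (Hr p) as [[Hl Hreach] [_ Hnot]].
      apply (Hnot (FinSeq (map (lab (J p)) (r p :: ns)))).
      * split.
        -- simpl. rewrite Hl. eauto.
        -- simpl in Hb |- *. rewrite map_map in Hb. simpl in Hb. exact Hb.
      * exists (r p). split; [split; auto|]. left. exists ns. split; [exact Hns|]. split; [|reflexivity].
        intros m E. apply (Hleaf (Some (existT _ p m))). rewrite last_cons_eq.
        change (@last (node Jc)) with (@last (option {q : {y | A y} & node (J q)})).
        rewrite (@last_map_eq (node (J p)) (option {q : {y | A y} & node (J q)}) (fun m0 => Some (existT (fun p => node (J p)) p m0)) ns (r p)).
        constructor. exact E.
  - assert (Hc := Hps 0). rewrite Hp0 in Hc. destruct (cedge_none Hc) as [p Hp1].
    assert (Hex : forall i, exists n, ps (S i) = Some (existT (fun p => node (J p)) p n)).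
    { induction i as [|i IH].
      - exists (r p). exact Hp1.
      - destruct IH as [n Hn]. assert (E := Hps (S i)). rewrite Hn in E.
        destruct (@cedge_some FS JF A J r _ _ _ E) as [m [Em _]]. eauto. }
    pose (g := fun i => proj1_sig (constructive_indefinite_description _ (Hex i))).
    assert (Hg : forall i, ps (S i) = Some (existT _ p (g i))) by (intro i; exact (proj2_sig (constructive_indefinite_description _ (Hex i)))).
    clearbody g.
    assert (Hg0 : g 0 = r p).
    { assert (E := Hg 0). rewrite Hp1 in E. injection E as E'. apply inj_pair2 in E'. symmetry. exact E'. }
    assert (Hge : forall i, edge (J p) (g i) (g (S i))).
    { intro i. assert (E := Hps (S i)). rewrite (Hg i), (Hg (S i)) in E.
      destruct (@cedge_some FS JF A J r _ _ _ E) as [m [Em Ed]]. injection Em as Em'. apply inj_pair2 in Em'. rewrite Em'. exact Ed. }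
    destruct (Hr p) as [[Hl Hreach] [_ Hnot]].
    apply (Hnot (InfSeq (fun i => lab (J p) (g i)))).
    + split.
      * simpl. rewrite Hg0. exact Hl.
      * simpl. replace (InfSeq (fun i => match i with 0 => x | S k => lab (J p) (g k) end))
          with (InfSeq (fun i => clab x J (ps i))); [exact Hb|].
        f_equal. apply functional_extensionality. intros [|k].
        -- rewrite Hp0. reflexivity.
        -- rewrite (Hg k). reflexivity.
    + exists (r p). split; [split; auto|]. right. exists g. auto.
Qed.
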